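(* Let $B\ge1$ and $\mathcal{E}>0$. Let $\widetilde{\mathbf{t}}=(\widetilde t_0,\dots,\widetilde t_{B-1})$ be the optimal solution of $$\text{minimize}_{\mathbf{t}}\ \sum_{b=0}^{B-1}4^b\exp(-2t_b)\quad\text{subject to}\quad\sum_{b=0}^{B-1}4t_b\le\mathcal{E},\ \ t_b\ge0,$$ (i.e. the duration subproblem with currents fixed at $i_b=2$), which is given by $\widetilde t_b=0$ if $\nu\ge 4^b/2$ and $\widetilde t_b=\tfrac12\log\bigl(\tfrac{1}{\nu}\cdot\tfrac{4^b}{2}\bigr)$ otherwise, with $\nu$ the dual variable of the energy constraint. If $\mathcal{E}>2B(B-1)\log 2$, then $\widetilde t_b>0$ for all $b\in\{0,\dots,B-1\}$ and $$\widetilde t_b=\frac{\mathcal{E}}{4B}+\Bigl(b-\frac{B-1}{2}\Bigr)\log 2.$$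
   Context: $\log$ denotes the natural logarithm. *)

(* Defs.v *)
From mathcomp Require Import all_boot all_order all_algebra.
From mathcomp Require Import all_classical all_reals all_analysis.
Set Implicit Arguments. Unset Strict Implicit. Unset Printing Implicit Defensive.
Import Order.TTheory GRing.Theory Num.Theory.
Local Open Scope ring_scope.

Definition dur_objective (R : realType) (B : nat) (t : 'I_B -> R) : R :=
  \sum_(b < B) (4 : R) ^+ b * expR (- 2 * t b).

Definition dur_feasible (R : realType) (B : nat) (E : R) (t : 'I_B -> R) : Prop :=
  \sum_(b < B) 4 * t b <= E /\ (forall b, 0 <= t b).

Definition dur_optimal (R : realType) (B : nat) (E : R) (t : 'I_B -> R) : Prop :=
  dur_feasible E t /\
  (forall s : 'I_B -> R, dur_feasible E s -> dur_objective t <= dur_objective s).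

(* Main.v *)
Require Import Defs.
From mathcomp Require Import all_boot all_order all_algebra.
From mathcomp Require Import all_classical all_reals all_analysis.
From mathcomp Require Import ring lra.
Import Order.TTheory GRing.Theory Num.Theory.
Local Open Scope ring_scope.

Lemma expR_strict (R : realType) (x : R) : expR x = 1 + x -> x = 0.
Proof.
move=> h.
have e2 : expR x = expR (x / 2) * expR (x / 2) by rewrite -expRD; congr expR; field.
have h1 := expR_ge1Dx (x / 2).
have h2 : 0 < expR (x / 2) := expR_gt0 _.
set y := expR (x / 2) in e2 h1 h2.
case: (lerP 0 (1 + x / 2)) => h3.
  have : (1 + x / 2) * (1 + x / 2) <= y * y.
    by apply: ler_pM.
  move=> h4. nra.
- nra.
Qed.

Lemma sum_idx (R : realType) (n : nat) :
  \sum_(b < n) ((b : nat)%:R * 2 : R) = n%:R * (n%:R - 1).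
Proof.
elim: n => [|n IH]; first by rewrite big_ord0 mul0r.
rewrite big_ord_recr /= IH -natr1. ring.
Qed.

Lemma sum_idx2 (R : realType) (n : nat) :
  (\sum_(b < n) ((b : nat)%:R : R)) * 2 = n%:R * (n%:R - 1).
Proof. by rewrite mulr_suml sum_idx. Qed.

Theorem lemma3 (R : realType) (B : nat) (E : R) (hB : (1 <= B)%N) (hE : 0 < E)
  (t : 'I_B -> R) :
  dur_optimal E t ->
  2 * B%:R * (B%:R - 1) * ln (2 : R) < E ->
  forall b : 'I_B,
    0 < t b /\
    t b = E / (4 * B%:R) + ((b : nat)%:R - (B%:R - 1) / 2) * ln (2 : R).
Proof.
move=> [[tsum tpos] topt] hEB.
have Bpos : (0 : R) < B%:R by rewrite ltr0n.
have Bge1 : (1 : R) <= B%:R by rewrite ler1n.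
have hB0 : (B%:R : R) != 0 by rewrite pnatr_eq0 -lt0n.
have l2 : (0 : R) < ln 2 by apply: ln_gt0; lra.
pose s (b : 'I_B) : R := E / (4 * B%:R) + ((b : nat)%:R - (B%:R - 1) / 2) * ln (2 : R).
have s0 : 0 < E / (4 * B%:R) - (B%:R - 1) / 2 * ln (2 : R).
  rewrite subr_gt0 ltr_pdivlMr; last by lra.
  have -> : (B%:R - 1) / 2 * ln 2 * (4 * B%:R) = 2 * B%:R * (B%:R - 1) * ln (2 : R).
    by field.
  exact: hEB.
have spos : forall b, 0 < s b.
  move=> b; rewrite /s.
  have : (0 : R) <= (b : nat)%:R * ln 2 by apply: mulr_ge0; rewrite ?ler0n; lra.
  lra.
have ssum : \sum_(b < B) 4 * s b = E.
  have -> : \sum_(b < B) 4 * s b = \sum_(b < B) (E / B%:R + ((b : nat)%:R * 2) * (2 * ln 2)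
             - 2 * (B%:R - 1) * ln 2).
    by apply: eq_bigr => b _; rewrite /s; by field.
  rewrite sumrB big_split /= -!mulr_suml sum_idx2 !sumr_const card_ord.
  rewrite -[E *+ B]mulr_natr -[2 *+ B]mulr_natr.
  by field.
pose c : R := expR (- E / (2 * B%:R) + (B%:R - 1) * ln 2).
have c0 : 0 < c := expR_gt0 _.
have key : forall (u : 'I_B -> R) (b : 'I_B), (4 : R) ^+ b * expR (- 2 * u b) = c * expR (- 2 * (u b - s b)).
  move=> u b.
  have -> : (4 : R) = expR (2 * ln 2).
    rewrite -[X in expR (X * _)]/(2%:R) expRM_natl lnK //; [by rewrite expr2; lra|].
    by rewrite posrE; lra.
  rewrite -expRM_natl -expRD /c -expRD; congr expR.
  rewrite /s; by field.
have objs : dur_objective s = B%:R * c.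
  rewrite /dur_objective.
  under eq_bigr => b _ do rewrite key subrr mulr0 expR0 mulr1.
  by rewrite sumr_const card_ord mulr_natl.
have sfeas : dur_feasible E s by split; [rewrite ssum | move=> b; apply/ltW/spos].
have objt := topt s sfeas.
rewrite objs in objt.
pose g (b : 'I_B) : R := c * (expR (- 2 * (t b - s b)) - (1 + (- 2 * (t b - s b)))).
have g0 : forall b, 0 <= g b.
  move=> b; apply: mulr_ge0; first exact: ltW.
  by rewrite subr_ge0 expR_ge1Dx.
have gsum : \sum_(b < B) g b = dur_objective t - B%:R * c
    + c / 2 * (\sum_(b < B) 4 * t b - \sum_(b < B) 4 * s b).
  have -> : \sum_(b < B) g b = \sum_(b < B) ((4 : R) ^+ b * expR (- 2 * t b) - c
      + c / 2 * (4 * t b - 4 * s b)).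
    apply: eq_bigr => b _; rewrite key /g; by field.
  rewrite big_split sumrB /= -mulr_sumr sumrB sumr_const card_ord mulr_natl.
  by [].
rewrite ssum in gsum.
have hle : c / 2 * (\sum_(b < B) 4 * t b - E) <= 0.
  apply: mulr_ge0_le0; [apply: divr_ge0; lra | lra].
have gs0 : \sum_(b < B) g b = 0.
  apply/eqP; rewrite eq_le; apply/andP; split; first by rewrite gsum; lra.
  by apply: sumr_ge0 => b _; apply: g0.
move=> b.
have gb : g b = 0 by apply: (psumr_eq0P _ gs0) => // i _; apply: g0.
have : expR (- 2 * (t b - s b)) = 1 + (- 2 * (t b - s b)).
  move: gb; rewrite /g => /eqP; rewrite mulf_eq0 (gt_eqF c0) /= subr_eq0.
  by move/eqP.
move/expR_strict => hd.
have ts : t b = s b by lra.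
split; [rewrite ts; exact: spos | exact: ts].
Qed.
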